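(* Let $G$ be a graph, $v$ a vertex of $G$, and let $G^v$ be the graph obtained from $G$ by adding a new vertex $v'$ with $N(v')=N(v)$. Then $G\in$ CBU if and only if $G^v\in$ CBU. Furthermore, if $G$ belongs to $d$-CBU then $G^v$ belongs to $(d+1)$-CBU.
   Context: Let $e_1,\ldots,e_d$ be the standard basis of $\mathbb{R}^d$. For $d\ge 1$, a graph belongs to $d$-CBU if one can assign to each vertex an axis-parallel box (product of $d$ closed intervals of positive length) in $\mathbb{R}^d$ such that the boxes have pairwise disjoint interiors, two distinct vertices are adjacent iff their boxes intersect, and any two intersecting boxes intersect in a $(d-1)$-dimensional box orthogonal to $e_1$. CBU is the union of the classes $d$-CBU over all $d\ge1$. *)

(* Defs.v *)
From Stdlib Require Import Reals.
From mathcomp Require Import all_boot.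
Set Implicit Arguments. Unset Strict Implicit. Unset Printing Implicit Defensive.

Open Scope R_scope.

(* A point of R^d: coordinates indexed by 'I_d; coordinate with index 0 is e_1. *)
Definition point (d : nat) := 'I_d -> R.

Record box (d : nat) := Box { lo : 'I_d -> R; hi : 'I_d -> R }.

Definition in_box d (b : box d) (x : point d) : Prop :=
  forall i, lo b i <= x i <= hi b i.

Definition in_interior d (b : box d) (x : point d) : Prop :=
  forall i, lo b i < x i < hi b i.

Definition facet_e1 d (b1 b2 : box d) : Prop :=
  exists (c : R) (l h : 'I_d -> R),
    (forall i : 'I_d, (i : nat) <> 0%N -> l i < h i) /\
    (forall x : point d, (in_box b1 x /\ in_box b2 x) <->
       (forall i : 'I_d, if (i : nat) == 0%N then x i = c else l i <= x i <= h i)).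

Definition is_dCBU (d : nat) (T : finType) (e : rel T) : Prop :=
  exists B : T -> box d,
    (forall u i, lo (B u) i < hi (B u) i) /\
    (forall u w, u <> w -> ~ (exists x, in_interior (B u) x /\ in_interior (B w) x)) /\
    (forall u w, u <> w -> (e u w <-> exists x, in_box (B u) x /\ in_box (B w) x)) /\
    (forall u w, u <> w -> (exists x, in_box (B u) x /\ in_box (B w) x) ->
                 facet_e1 (B u) (B w)).

Definition is_CBU (T : finType) (e : rel T) : Prop :=
  exists d, (1 <= d)%N /\ is_dCBU d e.

(* G^v: vertex set option T, where None is the new vertex v' with N(v') = N(v). *)
Definition add_twin (T : finType) (e : rel T) (v : T) : rel (option T) :=
  fun a b => match a, b with
  | Some x, Some y => e x y
  | None, Some y => e v y
  | Some x, None => e x v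
  | None, None => false
  end.

(* Main.v *)
Require Import Defs.
From Stdlib Require Import Reals Lra.
From mathcomp Require Import all_boot.

Set Implicit Arguments. Unset Strict Implicit. Unset Printing Implicit Defensive.
Local Open Scope R_scope.

Definition ext d (f : 'I_d -> R) (a : R) : 'I_d.+1 -> R :=
  fun i => match unlift ord_max i with Some j => f j | None => a end.
Definition restr d (x : point d.+1) : point d := fun j => x (lift ord_max j).

Lemma ext_lift d f a (j : 'I_d) : ext f a (lift ord_max j) = f j.
Proof. by rewrite /ext liftK. Qed.
Lemma ext_max d f a : @ext d f a ord_max = a.
Proof. by rewrite /ext unlift_none. Qed.
Lemma val_lift_max d (j : 'I_d) : nat_of_ord (lift ord_max j) = nat_of_ord j.
Proof. by rewrite /= /bump leqNgt ltn_ord. Qed.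

Lemma in_box_ext d l h a b (x : point d.+1) :
  in_box (Box (ext l a) (ext h b)) x <-> in_box (Box l h) (restr x) /\ a <= x ord_max <= b.
Proof.
split.
- move=> H; split.
  + move=> j; have := H (lift ord_max j); by rewrite /= !ext_lift.
  + have := H ord_max; by rewrite /= !ext_max.
- move=> [H1 H2] i; case: (unliftP ord_max i) => [j ->|->] /=;
    rewrite ?ext_lift ?ext_max //; exact: (H1 j).
Qed.

Lemma in_int_ext d l h a b (x : point d.+1) :
  in_interior (Box (ext l a) (ext h b)) x <-> in_interior (Box l h) (restr x) /\ a < x ord_max < b.
Proof.
split.
- move=> H; split.
  + move=> j; have := H (lift ord_max j); by rewrite /= !ext_lift.
  + have := H ord_max; by rewrite /= !ext_max.
- move=> [H1 H2] i; case: (unliftP ord_max i) => [j ->|->] /=;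
    rewrite ?ext_lift ?ext_max //; exact: (H1 j).
Qed.

Lemma lift_CBU (T : finType) (e : rel T) (e_irr : irreflexive e) (v : T) d
  (hd : (1 <= d)%N) : is_dCBU d e -> is_dCBU d.+1 (add_twin e v).
Proof.
move=> [B [Hlt [Hint [Hadj Hfac]]]].
pose f := fun a : option T => match a with Some u => u | None => v end.
pose ll := fun a : option T => match a with Some _ => 0 | None => 2 end.
pose hh := fun a : option T => match a with Some u => if u == v then 1 else 3 | None => 3 end.
have Hd0 : (d == 0)%N = false by move: hd; case: (d) => [|?].
have Hllhh : forall a, ll a < hh a.
  case=> [u|] /=; [case: (u == v)|]; lra.
have Hsame : forall a b, a <> b -> f a = f b ->
    forall t, ~ ((ll a <= t <= hh a) /\ (ll b <= t <= hh b)).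
  case=> [u|] [w|] /= Hab Hf t.
  - by subst.
  - subst; rewrite eqxx; lra.
  - subst; rewrite eqxx; lra.
  - by [].
have Hdiff : forall a b, f a <> f b -> exists p q, p < q /\
    forall t, ((ll a <= t <= hh a) /\ (ll b <= t <= hh b)) <-> p <= t <= q.
  case=> [u|] [w|] /= Hf.
  - case: (u == v); case: (w == v);
      [exists 0, 1 | exists 0, 1 | exists 0, 1 | exists 0, 3];
      (split; [lra | move=> t; split; lra]).
  - case: eqP => // _; exists 2, 3; split; [lra | move=> t; split; lra].
  - case: eqP => [E|_]; [by subst|]; exists 2, 3; split; [lra | move=> t; split; lra].
  - by [].
exists (fun a => Box (ext (lo (B (f a))) (ll a)) (ext (hi (B (f a))) (hh a))).
split; [|split; [|split]].
- move=> a i; case: (unliftP ord_max i) => [j ->|->] /=;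
    rewrite ?ext_lift ?ext_max; [exact: Hlt | exact: Hllhh].
- move=> a b Hab [x [Ha Hb]].
  move/in_int_ext: Ha => [Ha1 Ha2]; move/in_int_ext: Hb => [Hb1 Hb2].
  case: (f a =P f b) => Hf.
  + apply: (Hsame a b Hab Hf (x ord_max)); lra.
  + apply: (Hint _ _ Hf); exists (restr x); by split.
- move=> a b Hab.
  have He : add_twin e v a b = e (f a) (f b).
    by case: a b Hab => [u|] [w|] //= _; rewrite e_irr.
  rewrite He; case: (f a =P f b) => Hf.
  + rewrite Hf e_irr; split => // [[x [Ha Hb]]].
    move/in_box_ext: Ha => [_ Ha]; move/in_box_ext: Hb => [_ Hb].
    exfalso; exact: (Hsame a b Hab Hf (x ord_max) (conj Ha Hb)).
  + rewrite (Hadj _ _ Hf); have [p [q [Hpq Hpt]]] := Hdiff a b Hf.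
    have [H1 H2] := (Hpt p).2 (conj (Rle_refl p) (Rlt_le _ _ Hpq)).
    split.
    * move=> [y [Ha Hb]]; exists (ext y p); split; apply/in_box_ext; split;
        rewrite ?ext_max //; move=> j /=; rewrite /restr ext_lift;
        [exact: (Ha j) | exact: (Hb j)].
    * move=> [x [Ha Hb]]; move/in_box_ext: Ha => [Ha _]; move/in_box_ext: Hb => [Hb _].
      by exists (restr x).
- move=> a b Hab [x [Ha Hb]].
  move/in_box_ext: Ha => [Ha1 Ha2]; move/in_box_ext: Hb => [Hb1 Hb2].
  have Hf : f a <> f b by move=> Hf; exact: (Hsame a b Hab Hf (x ord_max) (conj Ha2 Hb2)).
  have [c [l [h [Hlh Hx]]]] := Hfac _ _ Hf (ex_intro _ (restr x) (conj Ha1 Hb1)).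
  have [p [q [Hpq Hpt]]] := Hdiff a b Hf.
  exists c, (ext l p), (ext h q); split.
  + move=> i; case: (unliftP ord_max i) => [j ->|->]; rewrite ?ext_lift ?ext_max //.
    rewrite val_lift_max; exact: Hlh.
  + move=> y; split.
    * move=> [Ya Yb]; move/in_box_ext: Ya => [Ya1 Ya2]; move/in_box_ext: Yb => [Yb1 Yb2].
      have Hy := (Hx (restr y)).1 (conj Ya1 Yb1).
      have Hq := (Hpt (y ord_max)).1 (conj Ya2 Yb2).
      move=> i; case: (unliftP ord_max i) => [j ->|->].
      -- rewrite val_lift_max !ext_lift; exact: (Hy j).
      -- by rewrite /= Hd0 !ext_max.
    * move=> Hy.
      have [Hr1 Hr2] : in_box (B (f a)) (restr y) /\ in_box (B (f b)) (restr y).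
        apply: (Hx _).2 => j; have := Hy (lift ord_max j).
        by rewrite val_lift_max !ext_lift.
      have [Ht1 Ht2] : (ll a <= y ord_max <= hh a) /\ (ll b <= y ord_max <= hh b).
        apply: (Hpt _).2; have := Hy ord_max; by rewrite /= Hd0 !ext_max.
      by split; apply/in_box_ext; split.
Qed.

Theorem mainTheorem10 (T : finType) (e : rel T)
  (e_sym : symmetric e) (e_irr : irreflexive e) (v : T) :
  (is_CBU e <-> is_CBU (add_twin e v)) /\
  (forall d : nat, (1 <= d)%N -> is_dCBU d e -> is_dCBU d.+1 (add_twin e v)).
Proof.
split; [split|].
- move=> [d [hd H]]; exists d.+1; split => //; exact: lift_CBU.
- move=> [d [hd [B [H1 [H2 [H3 H4]]]]]]; exists d; split => //.
  exists (fun u => B (Some u)); split; [|split; [|split]].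
  + move=> u; exact: H1.
  + move=> u w Huw; apply: H2 => -[E]; exact: Huw E.
  + move=> u w Huw; have Hs : Some u <> Some w by move=> -[E]; exact: Huw E.
    exact: (H3 _ _ Hs).
  + move=> u w Huw; have Hs : Some u <> Some w by move=> -[E]; exact: Huw E.
    exact: (H4 _ _ Hs).
- move=> d hd; exact: lift_CBU.
Qed.
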